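(* Let $(\alpha_n,\beta_n)_{n\ge1}$ be integers with $8\sum_{k<n}\beta_k<\alpha_n\le\beta_n$ for every $n$ and $\sum_i \frac{\log\beta_i}{2^i}<\infty$. Then for all sufficiently small $\varepsilon>0$, a $B_\varepsilon$-random subset of $\mathbb{Z}^2$ is sparse (with respect to $(\alpha_n,\beta_n)$) with probability $1$.
   Context: Distances on $\mathbb{Z}^2$ are $\ell_\infty$; the diameter of a set is the maximal distance between its elements; the $\beta$-neighborhood of $X$ is the set of points at distance at most $\beta$ from some point of $X$. For $E\subset\mathbb{Z}^2$ and integers $\beta\ge\alpha>0$, a nonempty $X\subset E$ is an $(\alpha,\beta)$-island in $E$ if its diameter is at most $\alpha$ and the $\beta$-neighborhood of $X$ contains no point of $E\setminus X$. Given $(\alpha_i,\beta_i)$ with $\alpha_i\le\beta_i$, the cleaning process sets $E_0=E$ and obtains $E_i$ from $E_{i-1}$ by removing all $(\alpha_i,\beta_i)$-islands of $E_{i-1}$ (the rank $i$ islands); a point is affected at step $i$ if it lies in the $\beta_i$-neighborhood of some rank $i$ island. $E$ is sparse if every point of $E$ is removed at some step and every point of $\mathbb{Z}^2$ is affected at only finitely many steps. $B_\varepsilon$ is the Bernoulli distribution on subsets of $\mathbb{Z}^2$: each point belongs to the set independently with probability $\varepsilon$. *)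

(* Defs.v *)
From Stdlib Require Import Reals ZArith List.
Import ListNotations.
Open Scope R_scope.

Definition point := (Z * Z)%type.

Definition dist (x y : point) : Z :=
  Z.max (Z.abs (fst x - fst y)) (Z.abs (snd x - snd y)).

Definition island (a b : Z) (S X : point -> Prop) : Prop :=
  (exists x, X x) /\
  (forall x, X x -> S x) /\
  (forall x y, X x -> X y -> (dist x y <= a)%Z) /\
  (forall x y, X x -> (dist x y <= b)%Z -> S y -> X y).

Definition clean_step (a b : Z) (S : point -> Prop) : point -> Prop :=
  fun p => S p /\ ~ (exists X, island a b S X /\ X p).

(* E_n of the cleaning process; parameters alpha n, beta n used for n >= 1 *)
Fixpoint cleaned (alpha beta : nat -> Z) (E : point -> Prop) (n : nat)
  : point -> Prop :=
  match n with
  | O => E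
  | S m => clean_step (alpha (S m)) (beta (S m)) (cleaned alpha beta E m)
  end.

Definition affected (alpha beta : nat -> Z) (E : point -> Prop) (i : nat)
  (p : point) : Prop :=
  exists X, island (alpha i) (beta i) (cleaned alpha beta E (pred i)) X /\
            exists x, X x /\ (dist x p <= beta i)%Z.

Definition sparse (alpha beta : nat -> Z) (E : point -> Prop) : Prop :=
  (forall p, E p -> exists n, ~ cleaned alpha beta E n p) /\
  (forall p, exists N, forall i, (N < i)%nat -> ~ affected alpha beta E i p).

(* Bernoulli(eps) product measure on {0,1}^(Z^2): cylinder sets and null sets.
   A cylinder is a finite list of distinct points with prescribed values. *)
Definition cylinder := list (point * bool).

Definition in_cyl (c : cylinder) (E : point -> bool) : Prop :=
  forall q : point * bool, In q c -> E (fst q) = snd q.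

Definition cyl_prob (eps : R) (c : cylinder) : R :=
  fold_right (fun (q : point * bool) (r : R) => (if snd q then eps else 1 - eps) * r) 1 c.

Definition valid_cyl (c : cylinder) : Prop := NoDup (map fst c).

Fixpoint psum (f : nat -> R) (m : nat) : R :=
  match m with O => 0 | S k => psum f k + f k end.

(* N is B_eps-null: outer measure zero (coverable by countably many cylinders
   of arbitrarily small total probability). *)
Definition bernoulli_null (eps : R) (N : (point -> bool) -> Prop) : Prop :=
  forall delta, 0 < delta ->
    exists c : nat -> cylinder,
      (forall n, valid_cyl (c n)) /\
      (forall E, N E -> exists n, in_cyl (c n) E) /\
      (forall m, psum (fun n => cyl_prob eps (c n)) m <= delta).

Definition almost_surely (eps : R) (P : (point -> bool) -> Prop) : Prop :=
  bernoulli_null eps (fun E => ~ P E).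

Definition Zsum (f : nat -> Z) (a b : nat) : Z :=
  fold_right Z.add 0%Z (map f (seq a (b - a))).

(* Main.v *)
Require Import Defs.
From Stdlib Require Import Reals ZArith List Lia Lra Classical Cantor.
Import ListNotations.
Open Scope R_scope.
Local Notation dist := Defs.dist.

Lemma pdist_sym x y : dist x y = dist y x.
Proof. unfold dist; lia. Qed.
Lemma pdist_tri x y z : (dist x z <= dist x y + dist y z)%Z.
Proof. unfold dist; lia. Qed.
Lemma pdist_self x : dist x x = 0%Z.
Proof. unfold dist; lia. Qed.
Lemma pdist_nonneg x y : (0 <= dist x y)%Z.
Proof. unfold dist; lia. Qed.

Definition zrange (r : nat) : list Z :=
  map (fun n => Z.of_nat n - Z.of_nat r)%Z (seq 0 (2*r+1)).
Definition box (x : point) (r : nat) : list point :=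
  flat_map (fun i => map (fun j => (fst x + i, snd x + j)%Z) (zrange r)) (zrange r).

Lemma flat_map_const_length {A B} (g : A -> B -> point) (l : list A) (m : list B) :
  length (flat_map (fun i => map (g i) m) l) = (length l * length m)%nat.
Proof.
  induction l; simpl; auto. rewrite length_app, length_map, IHl. lia.
Qed.

Lemma box_length x r : length (box x r) = ((2*r+1)*(2*r+1))%nat.
Proof.
  unfold box. rewrite (flat_map_const_length (fun i j => (fst x + i, snd x + j)%Z)).
  unfold zrange. rewrite length_map, length_seq. lia.
Qed.

Lemma in_zrange r z : (Z.abs z <= Z.of_nat r)%Z -> In z (zrange r).
Proof.
  intros H. unfold zrange. apply in_map_iff. exists (Z.to_nat (z + Z.of_nat r)).
  split. lia. apply in_seq. lia.
Qed.

Lemma in_box x y r : (dist x y <= Z.of_nat r)%Z -> In y (box x r).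
Proof.
  intros H. unfold box. apply in_flat_map. exists (fst y - fst x)%Z. split.
  - apply in_zrange. unfold dist in H. lia.
  - apply in_map_iff. exists (snd y - snd x)%Z. split.
    + destruct y; simpl; f_equal; lia.
    + apply in_zrange. unfold dist in H. lia.
Qed.

Lemma zrange_in r z : In z (zrange r) -> (Z.abs z <= Z.of_nat r)%Z.
Proof.
  unfold zrange. intros H. apply in_map_iff in H. destruct H as [n [<- Hn]].
  apply in_seq in Hn. lia.
Qed.

Lemma box_in x y r : In y (box x r) -> (dist x y <= Z.of_nat r)%Z.
Proof.
  unfold box. intros H. apply in_flat_map in H. destruct H as [i [Hi H]].
  apply in_map_iff in H. destruct H as [j [<- Hj]].
  apply zrange_in in Hi. apply zrange_in in Hj. unfold dist. simpl. lia.
Qed.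

Fixpoint Ssum (beta : nat -> Z) (k : nat) : Z :=
  match k with O => 0%Z | S m => (Ssum beta m + beta (S m))%Z end.

Lemma fold_add_c (l : list Z) c : fold_right Z.add c l = (fold_right Z.add 0 l + c)%Z.
Proof. induction l; simpl; lia. Qed.

Lemma Zsum_Ssum beta k : Zsum beta 1 (S k) = Ssum beta k.
Proof.
  unfold Zsum. replace (S k - 1)%nat with k by lia.
  induction k; [reflexivity|].
  rewrite seq_S, map_app, fold_right_app, fold_add_c, IHk.
  change (Ssum beta (S k)) with (Ssum beta k + beta (S k))%Z.
  replace (1+k)%nat with (S k) by lia. simpl. lia.
Qed.

Fixpoint Wit (alpha beta : nat -> Z) (k : nat) (x : point) : list (list point) :=
 match k with
 | O => [[x]]
 | S m => flat_map (fun y => flat_map (fun w1 => map (fun w2 => w1 ++ w2) (Wit alpha beta m y))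
                                       (Wit alpha beta m x))
          (filter (fun y => Z.ltb (alpha (S m) / 2) (dist x y))
                  (box x (Z.to_nat (2 * beta (S m)))))
 end.

Lemma survive alpha beta (E : point -> Prop)
  (hab : forall m, (8 * Ssum beta m < alpha (S m) /\ alpha (S m) <= beta (S m))%Z)
  (hs : forall m, (0 <= Ssum beta m)%Z) :
  forall k x, cleaned alpha beta E k x ->
     exists w, In w (Wit alpha beta k x) /\ forall z, In z w -> E z.
Proof.
  induction k; intros x Hx.
  - exists [x]. simpl. split; auto. intros z [<-|[]]; auto.
  - simpl in Hx. destruct Hx as [Hx Hn].
    destruct (hab k) as [H1 H2]. pose proof (hs k) as H3.
    set (h := (alpha (S k) / 2)%Z) in *.
    assert (Hh0 : (0 <= h)%Z) by (unfold h; apply Z.div_pos; lia).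
    assert (Hh1 : (2 * h <= alpha (S k))%Z) by (unfold h; pose proof (Z.mul_div_le (alpha (S k)) 2 ltac:(lia)); lia).
    destruct (classic (exists y, cleaned alpha beta E k y /\ (h < dist x y)%Z
                                 /\ (dist x y <= 2 * beta (S k))%Z)) as [[y [Hy [Hy1 Hy2]]]|Hno].
    + destruct (IHk x Hx) as [w1 [Hw1 Hw1']]. destruct (IHk y Hy) as [w2 [Hw2 Hw2']].
      exists (w1 ++ w2). split.
      * cbn [Wit]. apply in_flat_map. exists y. split.
        -- apply filter_In. split. apply in_box. lia. apply Z.ltb_lt. exact Hy1.
        -- apply in_flat_map. exists w1. split; auto. apply in_map. auto.
      * intros z Hz. apply in_app_or in Hz. destruct Hz; auto.
    + exfalso. apply Hn. exists (fun z => cleaned alpha beta E k z /\ (dist x z <= h)%Z).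
      split; [|split; auto; rewrite pdist_self; lia].
      split; [exists x; split; auto; rewrite pdist_self; lia|].
      split; [intros z [Hz _]; auto|].
      split.
      * intros z1 z2 [_ Hz1] [_ Hz2]. pose proof (pdist_tri z1 x z2). rewrite (pdist_sym z1 x) in H. lia.
      * intros z y [Hz Hz1] Hzy Hy. split; auto.
        destruct (Z.le_gt_cases (dist x y) h) as [|Hlt]; auto.
        exfalso. apply Hno. exists y. split; auto. split; auto.
        pose proof (pdist_tri x z y). pose proof (Z.div_le_upper_bound (alpha (S k)) 2 (alpha (S k))).
        lia.
Qed.

Lemma wit_spec alpha beta
  (hab : forall m, (8 * Ssum beta m < alpha (S m) /\ alpha (S m) <= beta (S m))%Z)
  (hs : forall m, (0 <= Ssum beta m)%Z) :
  forall k x w, In w (Wit alpha beta k x) ->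
     NoDup w /\ forall z, In z w -> (dist x z <= 2 * Ssum beta k)%Z.
Proof.
  induction k; intros x w Hw.
  - simpl in Hw. destruct Hw as [<-|[]]. split. constructor. auto. constructor.
    intros z [<-|[]]. rewrite pdist_self. simpl. lia.
  - cbn [Wit] in Hw. apply in_flat_map in Hw. destruct Hw as [y [Hy Hw]].
    apply filter_In in Hy. destruct Hy as [Hyb Hy]. apply Z.ltb_lt in Hy.
    apply box_in in Hyb.
    apply in_flat_map in Hw. destruct Hw as [w1 [Hw1 Hw]].
    apply in_map_iff in Hw. destruct Hw as [w2 [<- Hw2]].
    destruct (IHk x w1 Hw1) as [N1 D1]. destruct (IHk y w2 Hw2) as [N2 D2].
    destruct (hab k) as [H1 H2]. pose proof (hs k) as H3.
    assert (Hh : (4 * Ssum beta k <= alpha (S k) / 2)%Z).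
    { apply Z.div_le_lower_bound; lia. }
    split.
    + apply NoDup_app; auto. intros a Ha1 Ha2.
      pose proof (D1 a Ha1). pose proof (D2 a Ha2). pose proof (pdist_tri x a y).
      rewrite (pdist_sym a y) in H4. lia.
    + intros z Hz. change (Ssum beta (S k)) with (Ssum beta k + beta (S k))%Z.
      apply in_app_or in Hz. destruct Hz as [Hz|Hz].
      * pose proof (D1 z Hz). lia.
      * pose proof (D2 z Hz). pose proof (pdist_tri x y z).
        assert (dist x y <= 2 * beta (S k))%Z.
        { lia. }
        lia.
Qed.


Definition lsum {A} (f : A -> R) (l : list A) : R :=
  fold_right (fun a r => f a + r) 0 l.

Lemma lsum_app {A} (f : A -> R) l1 l2 : lsum f (l1 ++ l2) = lsum f l1 + lsum f l2.
Proof. induction l1; simpl; [lra|]. unfold lsum in *; simpl; rewrite IHl1; lra. Qed.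

Lemma lsum_flat_map {A B} (f : B -> R) (g : A -> list B) l :
  lsum f (flat_map g l) = lsum (fun a => lsum f (g a)) l.
Proof. induction l; simpl; auto. rewrite lsum_app, IHl. reflexivity. Qed.

Lemma lsum_map {A B} (f : B -> R) (g : A -> B) l : lsum f (map g l) = lsum (fun a => f (g a)) l.
Proof. induction l; simpl; auto. unfold lsum in *; simpl; rewrite IHl; auto. Qed.

Lemma lsum_le {A} (f g : A -> R) l : (forall a, In a l -> f a <= g a) -> lsum f l <= lsum g l.
Proof.
  induction l; intros H; simpl; [lra|]. unfold lsum in *; simpl.
  assert (f a <= g a) by (apply H; left; auto).
  assert (fold_right (fun a r => f a + r) 0 l <= fold_right (fun a r => g a + r) 0 l)
    by (apply IHl; intros; apply H; right; auto). lra.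
Qed.

Lemma lsum_nonneg {A} (f : A -> R) l : (forall a, 0 <= f a) -> 0 <= lsum f l.
Proof. intros H; induction l; simpl; [lra|]. unfold lsum in *; simpl. specialize (H a). lra. Qed.

Lemma lsum_const {A} (f : A -> R) l c : (forall a, In a l -> f a <= c) -> lsum f l <= INR (length l) * c.
Proof.
  induction l; intros H; [simpl; lra|]. unfold lsum in *.
  change (length (a :: l)) with (S (length l)). rewrite S_INR.
  change (fold_right (fun a r => f a + r) 0 (a :: l)) with (f a + fold_right (fun a r => f a + r) 0 l).
  assert (f a <= c) by (apply H; left; auto).
  assert (fold_right (fun a r => f a + r) 0 l <= INR (length l) * c)
    by (apply IHl; intros; apply H; right; auto).
  lra.
Qed.

Lemma lsum_scal {A} (f : A -> R) l c : lsum (fun a => c * f a) l = c * lsum f l.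
Proof. induction l; simpl; [lra|]. unfold lsum in *; simpl. rewrite IHl. lra. Qed.

Definition tocyl (w : list point) : cylinder := map (fun z => (z, true)) w.

Lemma cyl_prob_tocyl eps w : cyl_prob eps (tocyl w) = eps ^ length w.
Proof. induction w; simpl; auto. unfold cyl_prob in *; simpl. rewrite IHw. auto. Qed.

Lemma valid_tocyl w : NoDup w -> valid_cyl (tocyl w).
Proof.
  intros H. unfold valid_cyl, tocyl. rewrite map_map. simpl. rewrite map_id. auto.
Qed.

Lemma in_cyl_tocyl w (E : point -> bool) : (forall z, In z w -> E z = true) -> in_cyl (tocyl w) E.
Proof.
  intros H q Hq. unfold tocyl in Hq. apply in_map_iff in Hq. destruct Hq as [z [<- Hz]].
  simpl. auto.
Qed.

Lemma NoDup_map_inj {A B} (f : A -> B) l :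
  (forall a b, f a = f b -> a = b) -> NoDup l -> NoDup (map f l).
Proof.
  intros Hf H; induction H; simpl; constructor; auto.
  intros Hin. apply in_map_iff in Hin. destruct Hin as [y [Hy Hy']].
  apply Hf in Hy. subst. auto.
Qed.

Lemma psum_shift g M : psum g (S M) = g O + psum (fun m => g (S m)) M.
Proof. induction M; simpl in *; [lra|]. rewrite IHM. lra. Qed.

Lemma psum_nth_le {A} (f : A -> R) d l M :
  (forall a, 0 <= f a) -> (M <= length l)%nat -> psum (fun m => f (nth m l d)) M <= lsum f l.
Proof.
  intros Hf. revert M. induction l; intros M HM.
  - simpl in HM. assert (M = O) by lia. subst. simpl. lra.
  - destruct M. simpl. apply (lsum_nonneg f (a :: l)); auto.
    rewrite psum_shift. simpl. simpl in HM. specialize (IHl M ltac:(lia)).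
    unfold lsum in *; simpl. lra.
Qed.

Fixpoint Pre (L' : nat -> list cylinder) (K : nat) : list cylinder :=
  match K with O => [] | S k => Pre L' k ++ L' k end.

Lemma Pre_prefix L' K K' : (K <= K')%nat -> exists t, Pre L' K' = Pre L' K ++ t.
Proof.
  induction 1. exists []. rewrite app_nil_r; auto.
  destruct IHle as [t Ht]. exists (t ++ L' m). simpl. rewrite Ht, app_assoc. auto.
Qed.

Lemma Pre_length L' K : (forall n, L' n <> []) -> (K <= length (Pre L' K))%nat.
Proof.
  intros H. induction K; simpl; [lia|]. rewrite length_app.
  specialize (H K). destruct (L' K); [congruence|]. simpl. lia.
Qed.

Lemma Pre_nth L' K K' j d : (forall n, L' n <> []) -> (j < K)%nat -> (K <= K')%nat ->
  nth j (Pre L' K') d = nth j (Pre L' K) d.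
Proof.
  intros H Hj HK. destruct (Pre_prefix L' K K' HK) as [t Ht]. rewrite Ht.
  apply app_nth1. pose proof (Pre_length L' K H). lia.
Qed.

Lemma Pre_nth' L' K K' j d : (forall n, L' n <> []) -> (j < length (Pre L' K))%nat -> (K <= K')%nat ->
  nth j (Pre L' K') d = nth j (Pre L' K) d.
Proof.
  intros H Hj HK. destruct (Pre_prefix L' K K' HK) as [t Ht]. rewrite Ht.
  apply app_nth1. lia.
Qed.

Lemma Pre_in L' K c : In c (Pre L' K) -> exists n, In c (L' n).
Proof.
  induction K; simpl; [tauto|]. intros H. apply in_app_or in H. destruct H; eauto.
Qed.

Lemma Pre_sum (f : cylinder -> R) L' K delta :
  (forall n, lsum f (L' n) <= delta / 2 ^ (S n)) ->
  lsum f (Pre L' K) <= delta - delta / 2 ^ K.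
Proof.
  intros H. induction K; simpl.
  - unfold lsum; simpl. lra.
  - rewrite lsum_app. specialize (H K). simpl in H.
    assert (delta / (2 * 2 ^ K) = (delta / 2 ^ K) / 2).
    { field. apply pow_nonzero. lra. } lra.
Qed.

Definition dummy (L : nat) : list point := map (fun i => (Z.of_nat i, 0%Z)) (seq 0 L).

Lemma flatten_null eps (Heps : 0 < eps <= 1/2) (N : (point -> bool) -> Prop) :
  (forall delta, 0 < delta -> exists L : nat -> list cylinder,
     (forall n c, In c (L n) -> valid_cyl c) /\
     (forall E, N E -> exists n c, In c (L n) /\ in_cyl c E) /\
     (forall n, lsum (cyl_prob eps) (L n) <= delta / 2 ^ (S n))) ->
  bernoulli_null eps N.
Proof.
  intros HL delta Hd.
  destruct (HL (delta/2) ltac:(lra)) as [L [Hv [Hc Hs]]].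
  destruct (pow_lt_1_zero (1/2) ltac:(rewrite Rabs_pos_eq; lra) delta Hd) as [K HK].
  specialize (HK K (le_n K)). rewrite Rabs_pos_eq in HK by (apply pow_le; lra).
  set (L' := fun n => tocyl (dummy (K + S (S n))) :: L n).
  assert (HL'ne : forall n, L' n <> []) by (intros n; unfold L'; discriminate).
  assert (Hf : forall c, 0 <= cyl_prob eps c).
  { induction c as [|[q b] c IH]; unfold cyl_prob; simpl; [lra|].
    fold (cyl_prob eps c). apply Rmult_le_pos; auto. destruct b; lra. }
  assert (HvL' : forall n c, In c (L' n) -> valid_cyl c).
  { intros n c [<-|Hin]; eauto. apply valid_tocyl. apply NoDup_map_inj.
    intros a b Hab. injection Hab. lia. apply seq_NoDup. }
  assert (HsL' : forall n, lsum (cyl_prob eps) (L' n) <= delta / 2 ^ (S n)).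
  { intros n. unfold L'. unfold lsum at 1; simpl. fold (lsum (cyl_prob eps) (L n)).
    rewrite cyl_prob_tocyl. unfold dummy. rewrite length_map, length_seq.
    specialize (Hs n).
    assert (eps ^ (K + S (S n)) <= (1/2) ^ (K + S (S n))).
    { apply pow_incr. lra. }
    rewrite pow_add in H. rewrite pow_add in H. rewrite pow_add.
    assert ((1/2) ^ S (S n) = / 2 ^ S (S n)).
    { replace (1/2) with (/2) by lra. rewrite pow_inv. auto. }
    rewrite H0 in H. simpl in *.
    assert (0 < 2 ^ n) by (apply pow_lt; lra).
    assert (delta / 2 / (2 * 2 ^ n) = delta / (2 * (2 * 2 ^ n))) by (field; lra).
    assert ((1 / 2) ^ K * / (2 * (2 * 2 ^ n)) <= delta * / (2 * (2 * 2 ^ n))).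
    { apply Rmult_le_compat_r; [|lra]. apply Rlt_le, Rinv_0_lt_compat. lra. }
    assert (delta / (2 * 2 ^ n) = delta * / (2 * (2 * 2 ^ n)) + delta * / (2 * (2 * 2 ^ n))) by (field; lra).
    unfold Rdiv in *. lra. }
  set (c := fun m => nth m (Pre L' (S m)) nil).
  exists c. split; [|split].
  - intros m. unfold c. destruct (Nat.lt_ge_cases m (length (Pre L' (S m)))) as [Hm|Hm].
    + apply nth_In with (d := nil) in Hm. apply Pre_in in Hm. destruct Hm as [n Hn]. eauto.
    + rewrite nth_overflow by auto. constructor.
  - intros E HE. destruct (Hc E HE) as [n [c0 [Hin Hce]]].
    assert (Hin' : In c0 (Pre L' (S n))).
    { simpl. apply in_or_app. right. right. auto. }
    destruct (In_nth _ _ nil Hin') as [j [Hj Hjn]].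
    exists j. unfold c.
    rewrite <- (Pre_nth L' (S j) (Nat.max (S n) (S j)) j nil HL'ne ltac:(lia) ltac:(lia)).
    rewrite (Pre_nth' L' (S n) (Nat.max (S n) (S j)) j nil HL'ne Hj ltac:(lia)). unfold cylinder. rewrite Hjn. auto.
  - intros M.
    assert (psum (fun n => cyl_prob eps (c n)) M = psum (fun m => cyl_prob eps (nth m (Pre L' M) nil)) M).
    { assert (forall M', (M' <= M)%nat -> psum (fun n => cyl_prob eps (c n)) M' = psum (fun m => cyl_prob eps (nth m (Pre L' M) nil)) M').
      { induction M'; intros HM'; simpl; auto. rewrite IHM' by lia. unfold c.
        rewrite (Pre_nth L' (S M') M M' nil HL'ne ltac:(lia) HM'). auto. }
      auto. }
    rewrite H. eapply Rle_trans. apply psum_nth_le; auto. apply Pre_length; auto.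
    eapply Rle_trans. apply Pre_sum; eauto.
    assert (0 < delta / 2 ^ M) by (apply Rdiv_lt_0_compat; auto; apply pow_lt; lra). lra.
Qed.


Lemma ln_le' x y : 0 < x -> x <= y -> ln x <= ln y.
Proof. intros H [H1|<-]; [apply Rlt_le, ln_increasing; auto | lra]. Qed.
Lemma exp_le' x y : x <= y -> exp x <= exp y.
Proof. intros [H1|<-]; [apply Rlt_le, exp_increasing; auto | lra]. Qed.

Lemma lsum_ext {A} (f g : A -> R) l : (forall a, f a = g a) -> lsum f l = lsum g l.
Proof. intros H; induction l; simpl; auto. unfold lsum in *; simpl. rewrite IHl, H. auto. Qed.

Definition Acnt (beta : nat -> Z) (j : nat) : R :=
  INR ((2 * Z.to_nat (2 * beta j) + 1) * (2 * Z.to_nat (2 * beta j) + 1)).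

Fixpoint bseq eps beta k : R :=
  match k with O => eps | S m => Acnt beta (S m) * (bseq eps beta m) ^ 2 end.

Lemma bseq_nonneg eps beta k : 0 <= eps -> 0 <= bseq eps beta k.
Proof.
  intros H; induction k; [simpl; auto|]. cbn [bseq]. apply Rmult_le_pos. apply pos_INR.
  apply pow_le; auto.
Qed.

Lemma SW_le alpha beta eps (He : 0 <= eps) : forall k x,
  lsum (fun w => eps ^ length w) (Wit alpha beta k x) <= bseq eps beta k.
Proof.
  induction k; intros x.
  - simpl. unfold lsum; simpl. lra.
  - cbn [Wit bseq]. rewrite lsum_flat_map.
    set (b := bseq eps beta k).
    assert (Hb : 0 <= b) by apply bseq_nonneg, He.
    eapply Rle_trans.
    { apply lsum_const with (c := b * b). intros y _.
      rewrite lsum_flat_map.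
      eapply Rle_trans.
      { apply lsum_le with (g := fun w1 => b * eps ^ length w1). intros w1 _.
        rewrite lsum_map.
        rewrite (lsum_ext _ (fun w2 => eps ^ length w1 * eps ^ length w2)).
        2:{ intros w2. rewrite length_app, pow_add. auto. }
        rewrite lsum_scal. rewrite Rmult_comm. apply Rmult_le_compat_r.
        apply pow_le; auto. apply IHk. }
      rewrite lsum_scal. apply Rmult_le_compat_l; auto. }
    unfold Acnt. rewrite <- (box_length x). simpl (b ^ 2). rewrite Rmult_1_r.
    apply Rmult_le_compat_r. apply Rmult_le_pos; auto.
    apply le_INR. apply filter_length_le.
Qed.

Fixpoint Pk (beta : nat -> Z) (k : nat) : R :=
  match k with O => 0 | S m => Pk beta m + ln (Acnt beta (S m)) / 2 ^ (S m) end.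

Lemma Acnt_pos beta j : 0 < Acnt beta j.
Proof. unfold Acnt. apply lt_0_INR. lia. Qed.

Lemma bseq_exp eps beta (He : 0 < eps) : forall k,
  bseq eps beta k = exp (2 ^ k * (ln eps + Pk beta k)).
Proof.
  induction k.
  - simpl. rewrite Rplus_0_r, Rmult_1_l, exp_ln; auto.
  - cbn [bseq Pk]. rewrite IHk.
    pose proof (Acnt_pos beta (S k)).
    assert (0 < 2 ^ k) by (apply pow_lt; lra).
    replace (2 ^ S k * (ln eps + (Pk beta k + ln (Acnt beta (S k)) / 2 ^ S k)))
      with (ln (Acnt beta (S k)) + (2 ^ k * (ln eps + Pk beta k) + 2 ^ k * (ln eps + Pk beta k))).
    2:{ simpl. field. lra. }
    rewrite !exp_plus, exp_ln by auto. simpl. lra.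
Qed.

Fixpoint Qk (beta : nat -> Z) (k : nat) : R :=
  match k with O => 0 | S m => Qk beta m + ln (IZR (beta (S m))) / 2 ^ (S m) end.

Lemma Acnt_ln beta j : (1 <= beta j)%Z -> ln (Acnt beta j) <= ln 25 + 2 * ln (IZR (beta j)).
Proof.
  intros H. unfold Acnt.
  assert (Hb : 1 <= IZR (beta j)) by (apply IZR_le; lia).
  rewrite mult_INR, plus_INR, mult_INR, (INR_IZR_INZ (Z.to_nat (2 * beta j))), Z2Nat.id by lia.
  simpl (INR 2). simpl (INR 1). rewrite mult_IZR.
  replace (2 * ln (IZR (beta j))) with (ln (IZR (beta j) ^ 2)).
  2:{ rewrite ln_pow by lra. simpl. lra. }
  rewrite <- ln_mult by (try apply pow_lt; lra).
  apply ln_le'. nra. simpl. nra.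
Qed.

Lemma INR_le_pow2 k : INR k <= 2 ^ k.
Proof.
  induction k. simpl. lra.
  rewrite S_INR. simpl. assert (1 <= 2 ^ k) by (apply pow_R1_Rle; lra). lra.
Qed.


Lemma Qk_sum beta k :
  Qk beta (S k) = sum_f_R0 (fun i => ln (IZR (beta (S i))) / 2 ^ (S i)) k.
Proof.
  induction k. simpl. lra.
  cbn [Qk sum_f_R0]. cbn [Qk] in IHk. rewrite <- IHk. auto.
Qed.

Lemma Pk_bound beta (hb : forall j, (1 <= beta (S j))%Z) k :
  Pk beta k <= ln 25 * (1 - / 2 ^ k) + 2 * Qk beta k.
Proof.
  induction k. simpl. rewrite Rinv_1. lra.
  cbn [Pk Qk].
  pose proof (Acnt_ln beta (S k) (hb k)).
  assert (0 < 2 ^ k) by (apply pow_lt; lra).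
  set (u := / 2 ^ S k).
  assert (Hu : / 2 ^ k = 2 * u) by (unfold u; simpl; field; lra).
  assert (Hu0 : 0 < u) by (unfold u; apply Rinv_0_lt_compat, pow_lt; lra).
  unfold Rdiv. fold u. rewrite Hu in IHk.
  assert (ln (Acnt beta (S k)) * u <= (ln 25 + 2 * ln (IZR (beta (S k)))) * u)
    by (apply Rmult_le_compat_r; lra).
  lra.
Qed.

Definition zdec (n : nat) : Z :=
  if Nat.odd n then (- Z.of_nat (Nat.div2 n) - 1)%Z else Z.of_nat (Nat.div2 n).

Lemma zdec_surj z : exists n, zdec n = z.
Proof.
  destruct (Z.le_gt_cases 0 z).
  - exists (2 * Z.to_nat z)%nat. unfold zdec. rewrite Nat.odd_even, Nat.div2_double. lia.
  - exists (2 * Z.to_nat (- z - 1) + 1)%nat. unfold zdec. rewrite Nat.odd_odd, Nat.div2_odd'. lia.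
Qed.

Definition penum (a : nat) : point :=
  let (u, v) := Cantor.of_nat a in (zdec u, zdec v).

Lemma penum_surj p : exists a, penum a = p.
Proof.
  destruct p as [z1 z2]. destruct (zdec_surj z1) as [n1 H1]. destruct (zdec_surj z2) as [n2 H2].
  exists (Cantor.to_nat (n1, n2)). unfold penum. rewrite Cantor.cancel_of_to. subst. auto.
Qed.

Definition Lpt alpha beta K (a j : nat) : list cylinder :=
  flat_map (fun x => map tocyl (Wit alpha beta (a + 2 + K + j) x))
           (box (penum a) (Z.to_nat (beta (S (a + 2 + K + j))))).

Definition Lall alpha beta K (n : nat) : list cylinder :=
  flat_map (fun a => Lpt alpha beta K a (n - a)) (seq 0 (S n)).

Lemma pow_bound n : INR (S n) * / 4 ^ (n + 2) <= / 2 ^ (S n).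
Proof.
  pose proof (INR_le_pow2 (S n)).
  assert (0 < 2 ^ S n) by (apply pow_lt; lra).
  assert (4 ^ (n + 2) >= 2 ^ S n * 2 ^ S n).
  { replace (n + 2)%nat with (S (S n)) by lia. rewrite <- Rpow_mult_distr.
    replace (2 * 2) with 4 by lra. simpl (4 ^ S (S n)).
    assert (0 < 4 ^ S n) by (apply pow_lt; lra). simpl in *. lra. }
  assert (0 < 4 ^ (n + 2)) by (apply pow_lt; lra).
  apply Rmult_le_reg_r with (4 ^ (n+2)); auto.
  rewrite Rmult_assoc, Rinv_l by lra. rewrite Rmult_1_r.
  apply Rle_trans with (2 ^ S n); auto.
  apply Rmult_le_reg_l with (2 ^ S n); auto.
  rewrite <- Rmult_assoc, Rinv_r by lra. lra.
Qed.


Theorem lemma1 (alpha beta : nat -> Z)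
  (hab : forall n, (1 <= n)%nat ->
     (8 * Zsum beta 1 n < alpha n)%Z /\ (alpha n <= beta n)%Z)
  (hsum : exists l, infinite_sum
            (fun i => ln (IZR (beta (S i))) / 2 ^ (S i)) l) :
  exists eps0, 0 < eps0 <= 1 /\
    forall eps, 0 < eps < eps0 ->
      almost_surely eps
        (fun E => sparse alpha beta (fun p => E p = true)).
Proof.
  destruct hsum as [l Hl].
  set (s := fun i => ln (IZR (beta (S i))) / 2 ^ (S i)) in Hl.
  assert (hab' : forall m, (8 * Ssum beta m < alpha (S m) /\ alpha (S m) <= beta (S m))%Z).
  { intros m. rewrite <- Zsum_Ssum. apply hab. lia. }
  assert (hs : forall m, (0 <= Ssum beta m)%Z).
  { induction m. simpl. lia. cbn [Ssum]. destruct (hab' m). lia. }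
  assert (hb : forall j, (1 <= beta (S j))%Z).
  { intros j. destruct (hab' j). specialize (hs j). lia. }
  assert (Hs0 : forall i, 0 <= s i).
  { intros i. unfold s. unfold Rdiv. apply Rmult_le_pos.
    - rewrite <- ln_1. apply ln_le'. lra. apply IZR_le. apply hb.
    - apply Rlt_le, Rinv_0_lt_compat, pow_lt. lra. }
  assert (HQS : forall k, Qk beta (S k) = Qk beta k + s k) by (intros; reflexivity).
  assert (HQ0 : forall k, 0 <= Qk beta k).
  { induction k. simpl; lra. rewrite HQS. specialize (Hs0 k). lra. }
  assert (HQl' : forall k, Qk beta (S k) <= l).
  { intros k. rewrite Qk_sum. apply growing_ineq. intro n. rewrite tech5. specialize (Hs0 (S n)). unfold s in Hs0. lra.
    exact Hl. }
  assert (Hl0 : 0 <= l) by (specialize (HQl' O); specialize (HQ0 1%nat); lra).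
  assert (HlnB : forall k, ln (IZR (beta (S k))) <= 2 ^ S k * l).
  { intros k. specialize (HQl' k). rewrite HQS in HQl'. specialize (HQ0 k).
    assert (s k <= l) by lra. unfold s in H.
    assert (0 < 2 ^ S k) by (apply pow_lt; lra).
    assert (H1 : ln (IZR (beta (S k))) = (ln (IZR (beta (S k))) / 2 ^ S k) * 2 ^ S k) by (field; lra).
    rewrite H1. rewrite (Rmult_comm (2 ^ S k) l). apply Rmult_le_compat_r; lra. }
  assert (Hln25 : 0 < ln 25) by (rewrite <- ln_1; apply ln_increasing; lra).
  assert (Hln4 : 0 < ln 4) by (rewrite <- ln_1; apply ln_increasing; lra).
  assert (Pbound : forall k, Pk beta k <= ln 25 + 2 * l).
  { intros k. pose proof (Pk_bound beta hb k).
    assert (0 < / 2 ^ k) by (apply Rinv_0_lt_compat, pow_lt; lra).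
    destruct k. simpl in *. lra.
    specialize (HQl' k).
    assert (ln 25 * (1 - / 2 ^ S k) <= ln 25) by nra. lra. }
  set (T := ln 25 + 6 * l + ln 4).
  exists (exp (- T)). split.
  { split. apply exp_pos. rewrite <- exp_0. apply exp_le'. unfold T. lra. }
  intros eps [He1 He2].
  assert (Hlneps : ln eps < - T).
  { rewrite <- (ln_exp (- T)). apply ln_increasing; auto. }
  assert (Hhalf : eps <= 1/2).
  { assert (exp (- T) <= exp (- ln 4)) by (apply exp_le'; unfold T; lra).
    rewrite (exp_Ropp (ln 4)), exp_ln in H by lra. lra. }
  assert (Hkey : forall k, INR ((2 * Z.to_nat (beta (S k)) + 1) * (2 * Z.to_nat (beta (S k)) + 1))
                            * bseq eps beta k <= 9 * / 4 ^ k).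
  { intros k. set (B := IZR (beta (S k))).
    assert (HB1 : 1 <= B) by (unfold B; apply IZR_le; apply hb).
    assert (HI : INR ((2 * Z.to_nat (beta (S k)) + 1) * (2 * Z.to_nat (beta (S k)) + 1))
                 = (2 * B + 1) * (2 * B + 1)).
    { rewrite mult_INR, plus_INR, mult_INR, (INR_IZR_INZ (Z.to_nat (beta (S k)))), Z2Nat.id
        by (pose proof (hb k); lia).
      simpl (INR 2). simpl (INR 1). unfold B. lra. }
    rewrite HI, bseq_exp by lra.
    assert (E1 : (2*B+1)*(2*B+1) <= 9 * exp (2^k * (4*l))).
    { assert (HBB : exp (2 * ln B) = B * B).
      { replace (2 * ln B) with (ln B + ln B) by ring. rewrite exp_plus, exp_ln by lra. auto. }
      assert (exp (2 * ln B) <= exp (2^k*(4*l))).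
      { apply exp_le'. pose proof (HlnB k). fold B in H. simpl in H. lra. }
      nra. }
    assert (E2 : 2^k*(4*l + (ln eps + Pk beta k)) <= - (INR k * ln 4)).
    { pose proof (Pbound k). pose proof (INR_le_pow2 k). pose proof (pos_INR k).
      assert (0 < 2 ^ k) by (apply pow_lt; lra).
      assert (4*l + (ln eps + Pk beta k) <= - ln 4) by (unfold T in Hlneps; lra).
      nra. }
    assert (E3 : exp (- (INR k * ln 4)) = / 4 ^ k).
    { rewrite exp_Ropp, <- ln_pow, exp_ln; [auto|apply pow_lt; lra|lra]. }
    eapply Rle_trans. apply Rmult_le_compat_r. apply Rlt_le, exp_pos. exact E1.
    rewrite Rmult_assoc, <- exp_plus. rewrite <- E3. apply Rmult_le_compat_l. lra.
    apply exp_le'. rewrite Rmult_plus_distr_l in E2. lra. }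
  apply flatten_null; [lra|].
  intros delta Hd.
  destruct (pow_lt_1_zero (1/4) ltac:(rewrite Rabs_pos_eq; lra) (delta/9) ltac:(lra)) as [K HK].
  specialize (HK K (le_n K)). rewrite Rabs_pos_eq in HK by (apply pow_le; lra).
  exists (Lall alpha beta K). split; [|split].
  - intros n c Hc. unfold Lall in Hc. apply in_flat_map in Hc. destruct Hc as [a [_ Hc]].
    unfold Lpt in Hc. apply in_flat_map in Hc. destruct Hc as [x [_ Hc]].
    apply in_map_iff in Hc. destruct Hc as [w [<- Hw]].
    apply valid_tocyl. apply (proj1 (wit_spec alpha beta hab' hs _ _ _ Hw)).
  - intros E HE.
    assert (G : exists p, forall N, exists k, (N <= k)%nat /\ exists x,
                 (dist x p <= beta (S k))%Z /\ cleaned alpha beta (fun p => E p = true) k x).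
    { unfold sparse in HE. apply not_and_or in HE. destruct HE as [HE|HE].
      - apply not_all_ex_not in HE. destruct HE as [p Hp]. exists p. intros N.
        apply imply_to_and in Hp. destruct Hp as [Hp1 Hp2].
        exists N. split; auto. exists p. split. rewrite pdist_self. pose proof (hb N). lia.
        apply NNPP. intros Hc. apply Hp2. exists N. auto.
      - apply not_all_ex_not in HE. destruct HE as [p Hp]. exists p. intros N.
        apply not_ex_all_not with (n := N) in Hp.
        apply not_all_ex_not in Hp. destruct Hp as [i Hi].
        apply imply_to_and in Hi. destruct Hi as [Hi1 Hi2]. apply NNPP in Hi2.
        destruct Hi2 as [X [HX [x [Hx Hxp]]]].
        destruct i as [|k]; [lia|].
        exists k. split; [lia|]. exists x. split; auto.
        exact (proj1 (proj2 HX) x Hx). }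
    destruct G as [p Gp]. destruct (penum_surj p) as [a Ha].
    destruct (Gp (a + 2 + K)%nat) as [k [Hk [x [Hxp Hx]]]].
    destruct (survive alpha beta _ hab' hs k x Hx) as [w [Hw HwE]].
    exists (a + (k - (a + 2 + K)))%nat, (tocyl w). split.
    + unfold Lall. apply in_flat_map. exists a. split. apply in_seq. lia.
      unfold Lpt. replace (a + 2 + K + (a + (k - (a + 2 + K)) - a))%nat with k by lia.
      apply in_flat_map. exists x. split.
      * apply in_box. rewrite Ha, pdist_sym. pose proof (hb k). lia.
      * apply in_map. auto.
    + apply in_cyl_tocyl. auto.
  - intros n. unfold Lall. rewrite lsum_flat_map.
    eapply Rle_trans.
    { apply lsum_const with (c := 9 * (1/4)^K * / 4^(n+2)). intros a Ha. apply in_seq in Ha.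
      unfold Lpt. replace (a + 2 + K + (n - a))%nat with (n + 2 + K)%nat by lia.
      rewrite lsum_flat_map. eapply Rle_trans.
      { apply lsum_const with (c := bseq eps beta (n + 2 + K)). intros x _.
        rewrite lsum_map. rewrite (lsum_ext _ (fun w => eps ^ length w)) by (intros; apply cyl_prob_tocyl).
        apply SW_le; lra. }
      rewrite box_length. eapply Rle_trans. apply Hkey.
      rewrite pow_add, Rinv_mult. replace (1/4) with (/4) by lra. rewrite pow_inv. lra. }
    rewrite length_seq.
    pose proof (pow_bound n).
    assert (0 <= 9 * (1/4)^K) by (apply Rmult_le_pos; [lra|apply pow_le; lra]).
    assert (0 <= INR (S n) * / 4 ^ (n + 2)) by (apply Rmult_le_pos; [apply pos_INR|apply Rlt_le, Rinv_0_lt_compat, pow_lt; lra]).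
    replace (INR (S n) * (9 * (1 / 4) ^ K * / 4 ^ (n + 2))) with ((9 * (1/4)^K) * (INR (S n) * / 4 ^ (n + 2))) by ring.
    unfold Rdiv. apply Rmult_le_compat; auto. lra.
Qed.
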